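(* Let $G=(m,n,\boldsymbol{c},\boldsymbol{d},r_{\max},r_{\min})$ be an interbank lending game, and let $\Phi:\boldsymbol{S}\to\mathbb{R}$ be defined by $$\Phi(\boldsymbol{s})=\sum_{j\in B}\sum_{i\in L}\bigl(r_j(\boldsymbol{s},i)-r_{\min}\bigr)s_{ij},\qquad r_j(\boldsymbol{s},z)=(r_{\min}-r_{\max})\frac{\sum_{i=1}^{z}s_{ij}}{d_j}+r_{\max}.$$ Then $G$ is an exact potential game with potential function $\Phi$, i.e. for every lender $k\in L$, all $s_k,s_k'\in S_k$ and all $\boldsymbol{s}_{-k}\in\boldsymbol{S}_{-k}$, $$\Phi(s_k',\boldsymbol{s}_{-k})-\Phi(s_k,\boldsymbol{s}_{-k})=u_k(s_k',\boldsymbol{s}_{-k})-u_k(s_k,\boldsymbol{s}_{-k}).$$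
   Context: An interbank lending game $G=(m,n,\boldsymbol{c},\boldsymbol{d},r_{\max},r_{\min})$ consists of positive integers $m,n$, budgets $\boldsymbol{c}=(c_1,\dots,c_m)\in\mathbb{R}_{>0}^m$, demands $\boldsymbol{d}=(d_1,\dots,d_n)\in\mathbb{R}_{>0}^n$ and reals $0<r_{\min}<r_{\max}$. The players are the lenders $L=\{1,\dots,m\}$; $B=\{1,\dots,n\}$ is the set of borrowers. Lender $i$'s strategy set is $S_i=\{s_i=(s_{i1},\dots,s_{in})\in\mathbb{R}_{\ge0}^n:\sum_{j\in B}s_{ij}\le c_i\}$, the strategy space is $\boldsymbol{S}=\prod_{i\in L}S_i$, a strategy profile is $\boldsymbol{s}=(s_{ij})_{i\in L,j\in B}\in\boldsymbol{S}$, $\boldsymbol{s}_{-i}$ denotes the strategies of all lenders other than $i$, $\boldsymbol{S}_{-i}=\prod_{k\ne i}S_k$, and $(s_i',\boldsymbol{s}_{-i})$ is the profile where $i$ plays $s_i'$ and the others play as in $\boldsymbol{s}_{-i}$. The interest rate of borrower $j$ is $r_j(\boldsymbol{s})=(r_{\min}-r_{\max})\frac{\sum_{i\in L}s_{ij}}{d_j}+r_{\max}$, and lender $i$'s utility is $u_i(\boldsymbol{s})=\sum_{j\in B}(r_j(\boldsymbol{s})-r_{\min})s_{ij}$. *)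

(* Defs.v *)
(* Lenders are 'I_m (lender i+1 of the paper is index i),
   borrowers are 'I_n. A strategy profile is s : 'I_m -> 'I_n -> R,
   s i j = amount lender i lends to borrower j. *)
From mathcomp Require Import all_boot all_order all_algebra.
Set Implicit Arguments. Unset Strict Implicit. Unset Printing Implicit Defensive.
Import Order.TTheory GRing.Theory Num.Theory.
Local Open Scope ring_scope.

Section Game.
Variables (R : realFieldType) (m n : nat).

Definition in_strategy_set (c : 'I_m -> R) (i : 'I_m) (si : 'I_n -> R) : Prop :=
  (forall j, 0 <= si j) /\ \sum_(j < n) si j <= c i.

Definition in_profile_space (c : 'I_m -> R) (s : 'I_m -> 'I_n -> R) : Prop :=
  forall i, in_strategy_set c i (s i).

(* s_{-k} in S_{-k}: all lenders other than k play feasible strategies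
   (the k-th row of s is irrelevant, it is overwritten by deviate) *)
Definition in_others_space (c : 'I_m -> R) (k : 'I_m) (s : 'I_m -> 'I_n -> R) : Prop :=
  forall i, i != k -> in_strategy_set c i (s i).

Definition deviate (s : 'I_m -> 'I_n -> R) (k : 'I_m) (sk : 'I_n -> R)
  : 'I_m -> 'I_n -> R :=
  fun i => if i == k then sk else s i.

Definition rate (d : 'I_n -> R) (rmax rmin : R) (s : 'I_m -> 'I_n -> R)
  (j : 'I_n) : R :=
  (rmin - rmax) * ((\sum_(i < m) s i j) / d j) + rmax.

Definition utility (d : 'I_n -> R) (rmax rmin : R) (s : 'I_m -> 'I_n -> R)
  (i : 'I_m) : R :=
  \sum_(j < n) (rate d rmax rmin s j - rmin) * s i j.

(* r_j(s, z) for lender z (paper's z = val z + 1): sum over lenders 1..z *)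
Definition rate_upto (d : 'I_n -> R) (rmax rmin : R) (s : 'I_m -> 'I_n -> R)
  (j : 'I_n) (z : 'I_m) : R :=
  (rmin - rmax) * ((\sum_(i < m | (val i <= val z)%N) s i j) / d j) + rmax.

Definition potential (d : 'I_n -> R) (rmax rmin : R) (s : 'I_m -> 'I_n -> R) : R :=
  \sum_(j < n) \sum_(i < m) (rate_upto d rmax rmin s j i - rmin) * s i j.

End Game.

(* Main.v *)
Require Import Defs.
From mathcomp Require Import all_boot all_order all_algebra.
From mathcomp Require Import ring lra.
Import Order.TTheory GRing.Theory Num.Theory.
Local Open Scope ring_scope.

Lemma tri_sum {R : realFieldType} {m : nat} (f : 'I_m -> R) :
  2 * \sum_(i < m) (\sum_(i' < m | (val i' <= val i)%N) f i') * f i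
  = (\sum_(i < m) f i) ^+ 2 + \sum_(i < m) f i ^+ 2.
Proof.
have H1 : forall i : 'I_m, \sum_(i' < m | (val i' <= val i)%N) f i'
   = \sum_(i' < m | (val i' < val i)%N) f i' + f i.
  move=> i; rewrite (bigD1 i) //= addrC; congr (_ + _).
  by apply: eq_bigl => i'; rewrite ltn_neqAle andbC; congr (_ && _); rewrite eq_sym -val_eqE.
have Hsq : (\sum_(i < m) f i) ^+ 2 = \sum_(i < m) \sum_(i' < m) f i' * f i.
  rewrite expr2 mulr_sumr; apply: eq_bigr => i _; rewrite mulr_suml.
  by apply: eq_bigr => j _; rewrite mulrC.
have Hsplit : forall i : 'I_m, \sum_(i' < m) f i' * f i =
   \sum_(i' < m | (val i' <= val i)%N) f i' * f i + \sum_(i' < m | (val i < val i')%N) f i' * f i.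
  by move=> i; rewrite (bigID (fun i' : 'I_m => (val i' <= val i)%N)) /=; congr (_ + _);
     apply: eq_bigl => i'; rewrite -ltnNge.
have Hex : \sum_(i < m) \sum_(i' < m | (val i < val i')%N) f i' * f i
   = \sum_(i < m) \sum_(i' < m | (val i' < val i)%N) f i' * f i.
  rewrite (exchange_big_dep xpredT) //=.
  by apply: eq_bigr => i _; apply: eq_bigr => j _; exact: mulrC.
rewrite Hsq (eq_bigr _ (fun i _ => Hsplit i)) big_split /= Hex.
have E : forall i : 'I_m, (\sum_(i' < m | (val i' <= val i)%N) f i') * f i
   = \sum_(i' < m | (val i' < val i)%N) f i' * f i + f i ^+ 2.
  by move=> i; rewrite H1 mulrDl mulr_suml expr2.
have E2 : forall i : 'I_m, \sum_(i' < m | (val i' <= val i)%N) f i' * f i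
   = (\sum_(i' < m | (val i' <= val i)%N) f i') * f i by move=> i; rewrite mulr_suml.
rewrite (eq_bigr _ (fun i _ => E i)) (eq_bigr _ (fun i _ => E2 i)) (eq_bigr _ (fun i _ => E i)).
rewrite !big_split /=; ring.
Qed.

Lemma pot_eq (R : realFieldType) (m n : nat) (d : 'I_n -> R) (rmax rmin : R)
  (t : 'I_m -> 'I_n -> R) :
  potential d rmax rmin t = \sum_(j < n) ((rmin - rmax) / d j *
     (((\sum_(i < m) t i j) ^+ 2 + \sum_(i < m) t i j ^+ 2) / 2)
     + (rmax - rmin) * \sum_(i < m) t i j).
Proof.
apply: eq_bigr => j _.
rewrite -(tri_sum (fun i => t i j)).
have -> : \sum_(i < m) (rate_upto d rmax rmin t j i - rmin) * t i j =
  \sum_(i < m) ((rmin - rmax) / d j * ((\sum_(i' < m | (val i' <= val i)%N) t i' j) * t i j)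
     + (rmax - rmin) * t i j).
  by apply: eq_bigr => i _; rewrite /rate_upto; ring.
rewrite big_split /= -!mulr_sumr.
set S := \sum_(i < m) _. have h2 : (2 : R) != 0 by rewrite pnatr_eq0.
congr (_ + _); congr (_ * _). by field.
Qed.

Theorem theorem2p1 (R : realFieldType) (m n : nat)
  (c : 'I_m -> R) (d : 'I_n -> R) (rmax rmin : R)
  (hm : (0 < m)%N) (hn : (0 < n)%N)
  (hc : forall i, 0 < c i) (hd : forall j, 0 < d j)
  (hr0 : 0 < rmin) (hr : rmin < rmax) :
  forall (k : 'I_m) (sk sk' : 'I_n -> R) (s : 'I_m -> 'I_n -> R),
    in_strategy_set c k sk -> in_strategy_set c k sk' ->
    in_others_space c k s ->
    potential d rmax rmin (deviate s k sk') - potential d rmax rmin (deviate s k sk)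
    = utility d rmax rmin (deviate s k sk') k - utility d rmax rmin (deviate s k sk) k.
Proof.
move=> k sk sk' s _ _ _.
have HT : forall (x : 'I_n -> R) j, \sum_(i < m) deviate s k x i j
   = \sum_(i < m | i != k) s i j + x j.
  move=> x j; rewrite (bigD1 k) //= /deviate eqxx addrC; congr (_ + _).
  by apply: eq_bigr => i /negbTE ->.
have HQ : forall (x : 'I_n -> R) j, \sum_(i < m) deviate s k x i j ^+ 2
   = \sum_(i < m | i != k) s i j ^+ 2 + x j ^+ 2.
  move=> x j; rewrite (bigD1 k) //= /deviate eqxx addrC; congr (_ + _).
  by apply: eq_bigr => i /negbTE ->.
rewrite !pot_eq /utility /rate -!sumrB; apply: eq_bigr => j _.
rewrite !HT !HQ /deviate eqxx.
set O := \sum_(i < m | i != k) s i j. set Q := \sum_(i < m | i != k) _.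
have hdj : d j != 0 by rewrite gt_eqF.
by field.
Qed.
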